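(* Let $\beta\in\mathbb{C}$ with $|\beta|=1$, $m\in\mathrm{Hol}(\mathbb{D})$, $m\not\equiv0$, $T:\mathrm{Hol}(\mathbb{D})\to\mathrm{Hol}(\mathbb{D})$ given by $(Tf)(z)=m(z)f(\beta z)$, and let $T_0$ be the restriction of $T$ to $\mathrm{Hol}_0(\mathbb{D})=\{f\in\mathrm{Hol}(\mathbb{D}):f(0)=0\}$. Then (a) $m(0)\in\sigma(T)$; (b) $\rho(T)\subset\rho(T_0)$; (c) $\rho(T_0)\subset\rho(T)\cup\{m(0)\}$.
   Context: $\mathbb{D}$ is the open unit disc, $\mathrm{Hol}(\mathbb{D})$ the space of holomorphic functions on $\mathbb{D}$. For a linear operator $S$ on a space $Y$, $\rho(S)$ is the set of $\lambda\in\mathbb{C}$ with $\lambda\mathrm{Id}-S$ bijective on $Y$ and $\sigma(S)=\mathbb{C}\setminus\rho(S)$. *)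

(* Defs.v *)
From HB Require Import structures.
From mathcomp Require Import all_boot all_order all_algebra.
From mathcomp Require Import all_classical all_reals all_analysis.
From mathcomp Require Import complex.
Set Implicit Arguments. Unset Strict Implicit. Unset Printing Implicit Defensive.
Import Order.TTheory GRing.Theory Num.Theory.
Import numFieldNormedType.Exports.
Local Open Scope ring_scope.
Local Open Scope complex_scope.

Section Hol.
Variable R : realType.
Local Notation C := (complex R).

(* Functions are
   represented as C -> C; their values off the disc are irrelevant. *)
Definition hol_disc (f : C -> C) : Prop :=
  forall z : C, `|z| < 1 -> derivable (f : C^o -> C^o) z 1.

Definition eq_disc (f g : C -> C) : Prop :=
  forall z : C, `|z| < 1 -> f z = g z.

Definition hol0_disc (f : C -> C) : Prop := hol_disc f /\ f 0 = 0.

Definition resolvent (Y : (C -> C) -> Prop) (S : (C -> C) -> (C -> C))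
  (lam : C) : Prop :=
  (forall f1 f2, Y f1 -> Y f2 ->
     eq_disc (fun z => lam * f1 z - S f1 z) (fun z => lam * f2 z - S f2 z) ->
     eq_disc f1 f2) /\
  (forall g, Y g -> exists2 f, Y f & eq_disc (fun z => lam * f z - S f z) g).

Definition spectrum Y S (lam : C) : Prop := ~ resolvent Y S lam.

Definition wcomp (m : C -> C) (beta : C) (f : C -> C) : C -> C :=
  fun z => m z * f (beta * z).
End Hol.

(* Main.v *)
Require Import Defs.
From HB Require Import structures.
From mathcomp Require Import all_boot all_order all_algebra.
From mathcomp Require Import all_classical all_reals all_analysis.
From mathcomp Require Import complex.
From mathcomp Require Import ring.
Import Order.TTheory GRing.Theory Num.Theory.
Import numFieldNormedType.Exports.
Local Open Scope ring_scope.

Section H.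
Variable R : realType.
Local Notation C := (complex R).

Lemma hol_cst (c : C) : hol_disc (fun _ => c).
Proof. by move=> z _; exact: derivable_cst. Qed.

Lemma hol_add (f g : C -> C) : hol_disc f -> hol_disc g ->
  hol_disc (fun z => f z + g z).
Proof. by move=> hf hg z hz; exact: (derivableD (hf z hz) (hg z hz)). Qed.

Lemma hol_sub (f g : C -> C) : hol_disc f -> hol_disc g ->
  hol_disc (fun z => f z - g z).
Proof. by move=> hf hg z hz; exact: (derivableB (hf z hz) (hg z hz)). Qed.

Lemma hol_mulc (f : C -> C) (c : C) : hol_disc f ->
  hol_disc (fun z => f z * c).
Proof.
move=> hf z hz.
have -> : (fun z => f z * c) = (fun z => c *: (f z : (complex R)^o)).
  by apply: funext => w; rewrite mulrC.
exact: (@derivableZ _ (complex R)^o (complex R)^o f c z 1 (hf z hz)).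
Qed.
End H.

Theorem lemma2p4 (R : realType) (beta : complex R) (m : complex R -> complex R) :
  `|beta| = 1 ->
  hol_disc m ->
  ~ eq_disc m (fun _ => 0) ->
  [/\ spectrum (@hol_disc R) (wcomp m beta) (m 0),
      (forall lam, resolvent (@hol_disc R) (wcomp m beta) lam ->
                   resolvent (@hol0_disc R) (wcomp m beta) lam) &
      (forall lam, resolvent (@hol0_disc R) (wcomp m beta) lam ->
                   resolvent (@hol_disc R) (wcomp m beta) lam \/ lam = m 0)].
Proof.
move=> _ hm _.
have n0 : `|(0 : complex R)| < 1 by rewrite normr0 ltr01.
have Ha : spectrum (@hol_disc R) (wcomp m beta) (m 0).
  move=> [_ Hs]; have [f _ E] := Hs (fun _ => 1) (@hol_cst R 1).
  have := E 0 n0; rewrite /wcomp mulr0 subrr => /eqP.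
  by rewrite eq_sym oner_eq0.
split => //.
- move=> lam [Hi Hs].
  have Hne : lam != m 0 by apply/eqP => E; apply: Ha; rewrite -E.
  split.
    by move=> f1 f2 [h1 _] [h2 _] E; exact: Hi.
  move=> g [hg g0]; have [f hf E] := Hs g hg.
  exists f => //; split => //.
  have := E 0 n0; rewrite /wcomp mulr0 g0 -mulrBl => /eqP.
  by rewrite mulf_eq0 subr_eq0 (negbTE Hne) /= => /eqP.
- move=> lam [Hi Hs].
  case: (eqVneq lam (m 0)) => [->|Hne]; [by right|left].
  have Hne' : lam - m 0 != 0 by rewrite subr_eq0.
  split.
    move=> f1 f2 h1 h2 E.
    have hh : hol0_disc (fun z => f1 z - f2 z).
      split; first exact: hol_sub.
      have := E 0 n0; rewrite /wcomp mulr0 => /eqP.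
      rewrite -subr_eq0.
      have -> : lam * f1 0 - m 0 * f1 0 - (lam * f2 0 - m 0 * f2 0)
          = (lam - m 0) * (f1 0 - f2 0) by ring.
      by rewrite mulf_eq0 (negbTE Hne') /= => /eqP.
    have h0 : hol0_disc (fun _ : complex R => (0 : complex R)).
      split; [exact: hol_cst | done].
    have := Hi _ _ hh h0.
    have Ez : eq_disc (fun z => lam * (f1 z - f2 z) - wcomp m beta (fun z => f1 z - f2 z) z)
       (fun z => lam * (fun _ => 0) z - wcomp m beta (fun _ => 0) z).
      move=> z hz; have := E z hz; rewrite /wcomp /= => /eqP.
      rewrite -subr_eq0 => /eqP H.
      rewrite !mulr0 subr0 -H; ring.
    move=> /(_ Ez) H z hz; apply/eqP; rewrite -subr_eq0; apply/eqP; exact: (H z hz).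
  move=> g hg.
  pose c := g 0 / (lam - m 0).
  pose g' := fun z => g z - lam * c + m z * c.
  have hg' : hol0_disc g'.
    split; first (apply: hol_add; [apply: hol_sub; [exact: hg | exact: hol_cst] | exact: hol_mulc]).
    rewrite /g' /c.
    have -> : g 0 - lam * (g 0 / (lam - m 0)) + m 0 * (g 0 / (lam - m 0))
      = g 0 - (g 0 / (lam - m 0)) * (lam - m 0) by ring.
    by rewrite divfK // subrr.
  have [f0 [hf0 _] E] := Hs g' hg'.
  exists (fun z => f0 z + c); first (apply: hol_add; [exact: hf0 | exact: hol_cst]).
  move=> z hz; have := E z hz; rewrite /wcomp /g' /= => H.
  have -> : lam * (f0 z + c) - m z * (f0 (beta * z) + c)
     = (lam * f0 z - m z * f0 (beta * z)) + lam * c - m z * c by ring.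
  by rewrite H; ring.
Qed.
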